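(* For positive integers $n$, $k$ and $r$, \[S_{\leq m}(n,k,r)=\sum_{i=r}^{n}{n\choose i}{i\brace r}_{\leq m}{n-i\brace k-1}_{\leq m}(k-1)!\text{.}\]
   Context: $S_{\leq m}(n,k,r)$ (mixed restricted Stirling number of the second kind) is the number of ways to distribute the elements of $[n]$ into non-empty cells, where there are $r$ cells carrying the label $1$ (indistinguishable among themselves) and one cell each with labels $2,\dots,k$, such that every cell contains at most $m$ elements. ${n\brace k}_{\leq m}$ is the number of partitions of $[n]$ into $k$ non-empty blocks each of size at most $m$. *)

(* Defs.v *)
From mathcomp Require Import all_boot.
Set Implicit Arguments. Unset Strict Implicit. Unset Printing Implicit Defensive.

(* {n brace k}_{<= m}: partitions of [n] = 'I_n into k non-empty blocks
   (MathComp's [partition] excludes the empty block) each of size <= m. *)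
Definition rstirling (m n k : nat) : nat :=
  #|[set P : {set {set 'I_n}} |
      [&& partition P [set: 'I_n], #|P| == k & [forall B in P, #|B| <= m]]]|.

(* A distribution of [n] into r cells labelled 1 (indistinguishable) and
   one cell each with labels 2..k, all non-empty of size <= m, is encoded as
   a pair (g, P): g x = None means x lies in a label-1 cell, g x = Some j
   (j : 'I_(k-1)) means x lies in the cell with label j+2; P is the set
   partition of the label-1 elements into the r (unordered) label-1 cells. *)
Definition mixed_distribution (m n k r : nat)
    (gP : {ffun 'I_n -> option 'I_(k - 1)} * {set {set 'I_n}}) : bool :=
  let g := gP.1 in let P := gP.2 in
  [&& partition P [set x | g x == None], #|P| == r,
      [forall B in P, #|B| <= m] &
      [forall j : 'I_(k - 1),
         (0 < #|[set x | g x == Some j]|) && (#|[set x | g x == Some j]| <= m)]].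

Definition mixed_rstirling (m n k r : nat) : nat :=
  #|[set gP | @mixed_distribution m n k r gP]|.

(* Main.v *)
Require Import Defs.
From mathcomp Require Import all_boot zify.
Set Implicit Arguments. Unset Strict Implicit. Unset Printing Implicit Defensive.

Definition partsS (T : finType) (m : nat) (A : {set T}) (r : nat) :=
  [set P : {set {set T}} | [&& partition P A, #|P| == r & [forall B in P, #|B| <= m]]].

Lemma imset_preim (T U : finType) (f : T -> U) (A : {set T}) (C : {set U}) :
  C \subset f @: A -> f @: (f @^-1: C) = C.
Proof.
move=> sC; apply/setP=> y; apply/imsetP/idP.
  by case=> x xC ->; rewrite inE in xC.
move=> yC; have /imsetP[x _ exy] := subsetP sC y yC.
by exists x; rewrite // inE -exy.
Qed.

Lemma partsS_inj (T U : finType) (f : T -> U) (injf : injective f) m (A : {set T}) r :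
  #|partsS m (f @: A) r| = #|partsS m A r|.
Proof.
have injI : injective (fun P : {set {set T}} => [set f @: (B : {set T}) | B in P]).
  exact/imset_inj/imset_inj.
rewrite -(card_imset _ injI); apply: eq_card => Q; rewrite {1}/partsS inE.
apply/idP/imsetP.
  case/and3P=> pQ cQ bQ.
  have sub C : C \in Q -> C \subset f @: A.
    by move=> CQ; rewrite -(cover_partition pQ); apply: bigcup_sup.
  have eQ : Q = [set f @: (B : {set T}) | B in [set f @^-1: (C : {set U}) | C in Q]].
    apply/setP=> C; apply/idP/imsetP.
      move=> CQ; exists (f @^-1: C); first by apply/imsetP; exists C.
      by rewrite (imset_preim (A := A)) // sub.
    by case=> C1 /imsetP[C' C'Q ->] ->; rewrite (imset_preim (A := A)) // sub.
  exists [set f @^-1: (C : {set U}) | C in Q] => //.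
  rewrite inE -(imset_partition _ _ injf) -eQ pQ /=.
  rewrite -(card_imset _ (imset_inj injf)) -eQ cQ /=.
  apply/forall_inP=> B /imsetP[C CQ ->].
  rewrite -(card_imset _ injf) (imset_preim (A := A)) ?sub //.
  exact: (forall_inP bQ).
case=> P; rewrite inE => /and3P[pP cP bP] ->.
rewrite (imset_partition _ _ injf) pP card_imset ?cP //=; last exact: imset_inj.
apply/forall_inP=> C /imsetP[B BP ->]; rewrite card_imset //.
exact: (forall_inP bP).
Qed.

Lemma partsS_card (T : finType) m (A : {set T}) r :
  #|partsS m A r| = rstirling m #|A| r.
Proof.
pose f := fun i : 'I_#|A| => enum_val i.
have injf : injective f by apply: enum_val_inj.
have eA : f @: [set: 'I_#|A|] = A.
  apply/setP=> x; apply/imsetP/idP.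
    by case=> i _ ->; apply: enum_valP.
  by move=> xA; exists (enum_rank_in xA x); rewrite // /f enum_rankK_in.
by rewrite -{1}eA partsS_inj.
Qed.
Section Count.
Variables (n K m : nat) (A : {set 'I_n}).
Implicit Types (g : {ffun 'I_n -> option 'I_K}).

Definition fib g (j : 'I_K) := [set x | g x == Some j].
Definition good g := [forall j, (0 < #|fib g j|) && (#|fib g j| <= m)].
Definition GA := [set g | good g && ([set x | g x == None] == A)].
Definition Hf g : {ffun 'I_K -> {set 'I_n}} := [ffun j => fib g j].
Definition imH g := [set fib g j | j in [set: 'I_K]].

Lemma Hf_inj : injective Hf.
Proof.
move=> g1 g2 e; apply/ffunP => x.
case E1: (g1 x) => [j|].
  have : x \in Hf g1 j by rewrite ffunE inE E1.
  by rewrite e ffunE inE => /eqP ->.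
case E2: (g2 x) => [j|] //.
have : x \in Hf g2 j by rewrite ffunE inE E2.
by rewrite -e ffunE inE E1.
Qed.

Lemma imH_parts g : g \in GA -> imH g \in partsS m (~: A) K.
Proof.
rewrite inE => /andP[gg /eqP eA].
have disj : {in [set: 'I_K] &, forall i j : 'I_K, j != i -> [disjoint fib g i & fib g j]}.
  move=> i j _ _ nij; apply/pred0P => x /=; rewrite !inE.
  by case: (g x) => // a; apply/andP => -[/eqP [->] /eqP [] /eqP]; rewrite eq_sym (negbTE nij).
have ne : forall j : 'I_K, j \in [set: 'I_K] -> fib g j != set0.
  by move=> j _; rewrite -card_gt0; case/andP: (forallP gg j).
have [pP injB] := indexed_partition disj ne.
have cov : cover (imH g) = ~: A.
  rewrite /imH cover_imset; apply/setP => x; rewrite -eA !inE.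
  apply/bigcupP/idP.
    by case=> j _; rewrite inE => /eqP ->.
  by case E: (g x) => [j|] // _; exists j; rewrite ?inE ?E.
rewrite inE -cov pP /= card_in_imset // cardsT card_ord eqxx /=.
apply/forall_inP => B /imsetP[j _ ->].
by case/andP: (forallP gg j).
Qed.


Lemma perQ (Q : {set {set 'I_n}}) : Q \in partsS m (~: A) K ->
  #|[set g in GA | imH g == Q]| = K`!.
Proof.
rewrite inE => /and3P[pQ /eqP cQ bQ].
have tQ := partition_trivIset pQ.
rewrite -(card_imset _ Hf_inj).
have -> : Hf @: [set g in GA | imH g == Q] =
          [set h : {ffun 'I_K -> {set 'I_n}} in ffun_on (fun B => B \in Q) | injectiveb h].
  apply/setP => h; apply/imsetP/idP.
    case=> g; rewrite !inE => /andP[/andP[gg _] /eqP eQ] ->.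
    apply/andP; split.
      apply/ffun_onP => j; rewrite ffunE -eQ; apply/imsetP; exists j => //.
    apply/injectiveP => i j e.
    have := forallP gg i; case/andP; rewrite card_gt0 => /set0Pn[x xi] _.
    have : x \in Hf g j by rewrite -e ffunE.
    rewrite ffunE inE => /eqP.
    by move: xi; rewrite inE => /eqP -> [].
  rewrite inE => /andP[/ffun_onP hQ /injectiveP ih].
  have key x j : x \in h j -> [pick j' | x \in h j'] = Some j.
    move=> xj; case: pickP => [j' xj'|/(_ j)]; last by rewrite xj.
    case: (eqVneq j' j) => [-> //|nj].
    have nh : h j' != h j by apply: contra nj => /eqP /ih ->.
    have := trivIsetP tQ _ _ (hQ j') (hQ j) nh.
    by move=> /disjointFr /(_ xj'); rewrite xj.
  pose g : {ffun 'I_n -> option 'I_K} := [ffun x => [pick j | x \in h j]].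
  have eH : Hf g = h.
    apply/ffunP => j; apply/setP => x; rewrite !ffunE inE.
    rewrite /g ffunE; case xh: (x \in h j); first by rewrite (key _ _ xh) eqxx.
    case: pickP => [j' xj'|_] //; apply/negbTE; apply: contraFN xh => /eqP [<-] //.
  have fibE j : fib g j = h j by rewrite -eH ffunE.
  have eQ : imH g = Q.
    apply/eqP; rewrite eqEcard; apply/andP; split.
      by apply/subsetP => B /imsetP[j _ ->]; rewrite fibE hQ.
    rewrite cQ /imH card_in_imset ?cardsT ?card_ord //.
    by move=> i j _ _; rewrite !fibE => /ih.
  exists g => //; rewrite !inE eQ eqxx andbT; apply/andP; split.
    apply/forallP => j; rewrite fibE (forall_inP bQ _ (hQ j)) andbT card_gt0.
    by apply: contraTneq (hQ j) => ->; rewrite (partition0 pQ).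
  apply/eqP/setP => x; rewrite !inE.
  have xA : (x \in A) = ~~ (x \in cover Q) by rewrite (cover_partition pQ) inE negbK.
  rewrite xA -eQ /imH cover_imset; apply/idP/idP.
    move=> /eqP E; apply/bigcupP => -[j _]; rewrite fibE => xj.
    by move: E; rewrite /g ffunE (key _ _ xj).
  move=> nx; rewrite /g ffunE; case: pickP => [j xj|] //.
  by case/negP: nx; apply/bigcupP; exists j; rewrite ?fibE ?inE.
rewrite card_inj_ffuns_on card_ord.
have -> : #|(fun B => B \in Q)| = K by rewrite -cQ.
exact: ffactnn.
Qed.

End Count.

Lemma GA_card n K m (A : {set 'I_n}) :
  #|GA K m A| = rstirling m (n - #|A|) K * K`!.
Proof.
rewrite -sum1_card (partition_big (@imH n K) (mem (partsS m (~: A) K))); last first.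
  by move=> g; apply: imH_parts.
have -> : n - #|A| = #|~: A| by rewrite -{1}(card_ord n) -(cardsC A) addKn.
rewrite -partsS_card -sum_nat_const; apply: eq_bigr => Q QP.
by rewrite -(perQ QP) sum1dep_card; apply: eq_card => g; rewrite !inE.
Qed.

Lemma sum_by_size n (F : nat -> nat) :
  \sum_(A : {set 'I_n}) F #|A| = \sum_(i < n.+1) 'C(n, i) * F i.
Proof.
rewrite (partition_big (fun A : {set 'I_n} => (inord #|A| : 'I_n.+1)) predT) //.
apply: eq_bigr => i _.
have E (A : {set 'I_n}) : (inord #|A| == i :> 'I_n.+1) = (#|A| == i).
  rewrite -val_eqE /= inordK // ltnS.
  by have := max_card (mem A); rewrite card_ord.
rewrite (eq_bigl (fun A : {set 'I_n} => #|A| == i)); last by move=> A; rewrite E.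
rewrite (eq_bigr (fun _ => F i)); last by move=> A /eqP ->.
rewrite sum_nat_const; congr (_ * _).
have := cards_draws [set: 'I_n] i; rewrite cardsT card_ord => <-.
by apply: eq_card => A; rewrite !inE subsetT.
Qed.

Lemma rstirling_small m i r : i < r -> rstirling m i r = 0.
Proof.
move=> lt; apply: eq_card0 => P; rewrite !inE; apply/negP => /and3P[pP /eqP cP _].
have := card_partition pP; rewrite cardsT card_ord => ei.
have : #|P| <= \sum_(B in P) #|B|.
  rewrite -sum1_card; apply: leq_sum => B BP.
  by rewrite card_gt0 (partition_neq0 pP BP).
by rewrite -ei cP leqNgt lt.
Qed.

Theorem mainTheorem11 (m n k r : nat) :
  0 < n -> 0 < k -> 0 < r ->
  mixed_rstirling m n k r =
  \sum_(r <= i < n.+1)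
     'C(n, i) * rstirling m i r * rstirling m (n - i) (k - 1) * (k - 1)`!.
Proof.
move=> _ _ _.
rewrite /mixed_rstirling.
have step1 : #|[set gP | @mixed_distribution m n k r gP]| =
   \sum_(g : {ffun 'I_n -> option 'I_(k - 1)})
       #|[set P | @mixed_distribution m n k r (g, P)]|.
  have -> : \sum_(g : {ffun 'I_n -> option 'I_(k - 1)})
       #|[set P | @mixed_distribution m n k r (g, P)]| =
       \sum_(g : {ffun 'I_n -> option 'I_(k - 1)})
         \sum_(P | @mixed_distribution m n k r (g, P)) 1.
    by apply: eq_bigr => g _; rewrite sum1dep_card.
  rewrite pair_big_dep /= -sum1dep_card; apply: eq_bigl => -[g P].
  by [].
rewrite step1.
have step2 (g : {ffun 'I_n -> option 'I_(k - 1)}) :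
   #|[set P | @mixed_distribution m n k r (g, P)]| =
   @good n (k - 1) m g * rstirling m #|[set x | g x == None]| r.
  rewrite -partsS_card; case G: (@good n (k - 1) m g).
    rewrite mul1n; apply: eq_card => P; rewrite !inE /mixed_distribution /=.
    by move: G; rewrite /good /fib => ->; rewrite andbT.
  rewrite mul0n; apply: eq_card0 => P; rewrite !inE /mixed_distribution /=.
  by move: G; rewrite /good /fib => ->; rewrite !andbF.
rewrite (eq_bigr _ (fun g _ => step2 g)).
rewrite (partition_big (fun g : {ffun 'I_n -> option 'I_(k - 1)} => [set x | g x == None]) predT) //=.
rewrite (eq_bigr (fun A : {set 'I_n} => rstirling m #|A| r * (rstirling m (n - #|A|) (k - 1) * (k - 1)`!))); last first.
  move=> A _; rewrite -GA_card.
  rewrite (eq_bigr (fun g => @good n (k-1) m g * rstirling m #|A| r)); last by move=> g /eqP ->.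
  rewrite -big_distrl /= mulnC; congr (_ * _).
  rewrite /GA -sum1dep_card big_mkcondl /=; apply: eq_bigr => g _.
  by case: (@good _ _ _ g).
rewrite (sum_by_size n (fun i => rstirling m i r * (rstirling m (n - i) (k - 1) * (k - 1)`!))).
rewrite big_geq_mkord /= [RHS]big_mkcond /=; apply: eq_bigr => i _.
case: leqP => [_|lt]; first by rewrite !mulnA.
by rewrite rstirling_small // muln0.
Qed.
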